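(* In the setting of the context, let $\nu$ be a probability measure on $M$ with $$\int f_k\,d\nu=0,\qquad \int f_k^2\,d\nu=1,\qquad \int \Gamma(f_k)\,d\nu\le \lambda_k(\mu),$$ (it automatically satisfies the improved Poincaré inequality $\int f^2d\nu\le \frac{1}{\lambda_k(\nu)}\int\Gamma(f)d\nu$ for all $f\in H^1(\nu)\cap E_{k-1}^\perp$). Then for all $g\in H^1(\nu)\cap E_{k-1}^{\perp}$, $$\left|\int\bigl(\lambda_k(\nu)\,p_k^\perp g-\Gamma(p_k^\perp,g)\bigr)\,d\nu\right|\le\Bigl[\lambda_k(\mu)-\lambda_k(\nu)+\sum_{i=1}^{k-1}\bigl(\lambda_k(\nu)-\lambda_i(\nu)\bigr)\,d(f_k,Sp_i(\nu)^\perp)^2\Bigr]^{1/2}\sqrt{\int\Gamma(g)\,d\nu}.$$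
   Context: $L$ is a Markov generator on a state space $M$, reversible with respect to a probability measure $\mu$, with carré du champ operator $\Gamma(f,g)=\frac12\bigl(L(fg)-fLg-gLf\bigr)$, $\Gamma(f)=\Gamma(f,f)$. Let $0<\lambda_1(\mu)<\lambda_2(\mu)<\cdots$ be the eigenvalues of $-L$ counted without multiplicity, fix $k\ge1$, and let $f_k$ satisfy $-Lf_k=\lambda_k(\mu)f_k$, $\int f_k\,d\mu=0$, $\int f_k^2\,d\mu=1$. For a probability measure $\nu$ on $M$ define $H^1(\nu)=\{f\in L^2(\nu):\int f\,d\nu=0,\ \int\Gamma(f)\,d\nu<\infty\}$. Set $E_0=\{0\}$ and recursively, for $m\ge0$, with $\perp$ denoting orthogonal complement in $L^2(\nu)$: $$\lambda_{m+1}(\nu)=\inf_{f\in H^1(\nu)\cap E_m^\perp,\ f\neq 0}\frac{\int\Gamma(f)\,d\nu}{\int f^2\,d\nu},$$ $$Sp_{m+1}(\nu)=\Bigl\{f\in H^1(\nu)\cap E_m^\perp:\ \forall g\in H^1(\nu)\cap E_m^\perp,\ \int fg\,d\nu=\tfrac{1}{\lambda_{m+1}(\nu)}\int\Gamma(f,g)\,d\nu\Bigr\},$$ and $E_{m+1}=Sp_1(\nu)\oplus\cdots\oplus Sp_{m+1}(\nu)$. Decompose $f_k=p_k+p_k^\perp$ where $p_k$ is the $L^2(\nu)$-orthogonal projection of $f_k$ onto $E_{k-1}$ and $p_k^\perp\in E_{k-1}^\perp$, and write $p_k=p_k^1+\dots+p_k^{k-1}$ with $p_k^i\in Sp_i(\nu)$.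 Define $d(f_k,Sp_i(\nu)^\perp)^2:=\int (p_k^i)^2\,d\nu$ (the squared $L^2(\nu)$-distance from $f_k$ to $Sp_i(\nu)^\perp$). *)

(* Defs.v *)
From HB Require Import structures.
From mathcomp Require Import all_boot all_order all_algebra.
From mathcomp Require Import all_classical all_reals all_analysis.
Set Implicit Arguments. Unset Strict Implicit. Unset Printing Implicit Defensive.
Import Order.TTheory GRing.Theory Num.Theory.
Import numFieldNormedType.Exports.
Local Open Scope classical_set_scope.
Local Open Scope ring_scope.

Section MarkovDefs.
Context {d : measure_display} {M : measurableType d} {R : realType}.

Definition Gamma (L : (M -> R) -> (M -> R)) (f g : M -> R) : M -> R :=
  fun x => (L (f \* g) x - f x * L g x - g x * L f x) / 2.

Definition function_algebra (A : set (M -> R)) : Prop :=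
  [/\ forall f, A f -> measurable_fun setT f,
      forall c : R, A (fun _ => c),
      forall f g, A f -> A g -> A (f \+ g),
      forall (a : R) f, A f -> A (fun x => a * f x)
    & forall f g, A f -> A g -> A (f \* g)].

(* L is a Markov generator on the algebra A: a linear operator on A,
   with measurable values, conservative (L 1 = 0) and satisfying the
   positive maximum principle (the characterization of generators of
   Markov semigroups). *)
Definition markov_generator (A : set (M -> R)) (L : (M -> R) -> (M -> R)) : Prop :=
  function_algebra A /\ (forall f, A f -> measurable_fun setT (L f)) /\
  [/\ forall f g, A f -> A g -> L (f \+ g) = L f \+ L g,
      forall (a : R) f, A f -> L (fun x => a * f x) = (fun x => a * L f x),
      L (fun _ => 1) = (fun _ => 0)
    & forall f x, A f -> (forall y, f y <= f x) -> 0 <= f x -> L f x <= 0].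

Definition reversible (A : set (M -> R)) (L : (M -> R) -> (M -> R))
  (mu : probability M R) : Prop :=
  forall f g, A f -> A g ->
    mu.-integrable setT (fun x => (f x * L g x)%:E) ->
    mu.-integrable setT (fun x => (g x * L f x)%:E) ->
    (\int[mu]_x (f x * L g x)%:E = \int[mu]_x (g x * L f x)%:E)%E.

Definition eigenfun (A : set (M -> R)) (L : (M -> R) -> (M -> R))
  (mu : probability M R) (lam : R) (f : M -> R) : Prop :=
  [/\ A f, mu.-integrable setT (fun x => (f x ^+ 2)%:E),
      (0 < \int[mu]_x (f x ^+ 2)%:E)%E
    & {ae mu, forall x, - L f x = lam * f x}].

Definition eigenvalue A L mu (lam : R) : Prop := exists f, eigenfun A L mu lam f.

(* lamseq 1 < ... < lamseq k are the k smallest positive eigenvalues of -L,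
   counted without multiplicity. *)
Definition first_eigenvalues A L mu (k : nat) (lamseq : nat -> R) : Prop :=
  [/\ 0 < lamseq 1%N,
      forall i, (1 <= i < k)%N -> lamseq i < lamseq i.+1,
      forall i, (1 <= i <= k)%N -> eigenvalue A L mu (lamseq i)
    & forall lam, eigenvalue A L mu lam -> 0 < lam -> lam <= lamseq k ->
        exists2 i, (1 <= i <= k)%N & lam = lamseq i].

Section Nu.
Variables (A : set (M -> R)) (L : (M -> R) -> (M -> R)) (nu : probability M R).

Definition H1 (f : M -> R) : Prop :=
  [/\ A f,
      (\int[nu]_x (f x ^+ 2)%:E < +oo)%E,
      (\int[nu]_x (f x)%:E = 0)%E
    & (\int[nu]_x (Gamma L f f x)%:E < +oo)%E].

Definition orth (E : set (M -> R)) : set (M -> R) :=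
  [set f | forall e, E e -> \int[nu]_x (f x * e x) = 0].

Definition lamE (E : set (M -> R)) : R :=
  inf [set \int[nu]_x (Gamma L f f x) / \int[nu]_x (f x ^+ 2) |
       f in [set f | H1 f /\ orth E f /\ (0 < \int[nu]_x (f x ^+ 2)%:E)%E]].

Definition SpE (E : set (M -> R)) : set (M -> R) :=
  [set f | H1 f /\ orth E f /\
     forall g, H1 g -> orth E g ->
       \int[nu]_x (Gamma L f g x) = lamE E * \int[nu]_x (f x * g x)].

Fixpoint Espace (m : nat) : set (M -> R) :=
  match m with
  | 0%N => [set (fun _ => 0)]
  | m'.+1 => [set e \+ s | e in Espace m' & s in SpE (Espace m')]
  end.

(* lambda_m(nu) and Sp_m(nu), meaningful for m >= 1 *)
Definition lam_nu (m : nat) : R := lamE (Espace m.-1).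
Definition Sp (m : nat) : set (M -> R) := SpE (Espace m.-1).

End Nu.
End MarkovDefs.

(* Main.v *)
Require Import Defs.
From HB Require Import structures.
From mathcomp Require Import all_boot all_order all_algebra.
From mathcomp Require Import all_classical all_reals all_analysis.
From mathcomp Require Import ring lra.
Import Order.TTheory GRing.Theory Num.Theory.
Import numFieldNormedType.Exports.
Local Open Scope classical_set_scope.
Local Open Scope ring_scope.

Section Gen.
Context {d : measure_display} {M : measurableType d} {R : realType}.
Variables (A : set (M -> R)) (L : (M -> R) -> (M -> R)).
Hypothesis hL : markov_generator A L.

Lemma A_meas {f} : A f -> measurable_fun setT f.
Proof. by case: hL => [[H ? ? ? ?] _]; apply: H. Qed.
Lemma A_cst (c : R) : A (fun _ => c).
Proof. by case: hL => [[? H ? ? ?] _]; apply: H. Qed.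
Lemma A_add {f g} : A f -> A g -> A (f \+ g).
Proof. by case: hL => [[? ? H ? ?] _]; apply: H. Qed.
Lemma A_scale (a : R) {f} : A f -> A (fun x => a * f x).
Proof. by case: hL => [[? ? ? H ?] _]; apply: H. Qed.
Lemma A_mul {f g} : A f -> A g -> A (f \* g).
Proof. by case: hL => [[? ? ? ? H] _]; apply: H. Qed.
Lemma L_meas {f} : A f -> measurable_fun setT (L f).
Proof. by case: hL => _ [H _]; apply: H. Qed.
Lemma L_add {f g} : A f -> A g -> L (f \+ g) = L f \+ L g.
Proof. by case: hL => _ [_ [H _ _ _]]; apply: H. Qed.
Lemma L_scale (a : R) {f} : A f -> L (fun x => a * f x) = (fun x => a * L f x).
Proof. by case: hL => _ [_ [_ H _ _]]; apply: H. Qed.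
Lemma L_one : L (fun _ => 1) = (fun _ => 0).
Proof. by case: hL => _ [_ [_ _ H _]]. Qed.
Lemma L_max {f} x : A f -> (forall y, f y <= f x) -> 0 <= f x -> L f x <= 0.
Proof. by case: hL => _ [_ [_ _ _ H]]; apply: H. Qed.

Lemma L_cst (c : R) : L (fun _ => c) = (fun _ => 0).
Proof.
have -> : (fun _ : M => c) = (fun x => c * (fun _ => 1) x).
  by apply/funext => x; rewrite mulr1.
rewrite L_scale; last exact: A_cst. rewrite L_one; apply/funext => x; by rewrite mulr0.
Qed.

Lemma Gamma_sym f g : Gamma L f g = Gamma L g f.
Proof.
apply/funext => x; rewrite /Gamma.
have -> : f \* g = g \* f by apply/funext => y /=; rewrite mulrC.
ring.
Qed.

Lemma GammaD {f g h} : A f -> A g -> A h ->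
  forall x, Gamma L (f \+ g) h x = Gamma L f h x + Gamma L g h x.
Proof.
move=> Af Ag Ah x.
rewrite /Gamma.
have -> : (f \+ g) \* h = (f \* h) \+ (g \* h) by apply/funext => y /=; rewrite mulrDl.
rewrite (L_add (A_mul Af Ah) (A_mul Ag Ah)) (L_add Af Ag) /=; ring.
Qed.

Lemma GammaZ (a : R) {f h} : A f -> A h ->
  forall x, Gamma L (fun y => a * f y) h x = a * Gamma L f h x.
Proof.
move=> Af Ah x.
rewrite /Gamma.
have -> : (fun y => a * f y) \* h = (fun y => a * (f \* h) y)
  by apply/funext => y /=; rewrite mulrA.
rewrite (L_scale _ (A_mul Af Ah)) (L_scale _ Af) /=; ring.
Qed.

Lemma Gamma_ge0 {f} x : A f -> 0 <= Gamma L f f x.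
Proof.
move=> Af.
have Aff := A_mul Af Af.
have A1 := A_scale (-1) Aff.
have A2 := A_scale (2 * f x) Af.
have A3 := A_cst (- f x ^+ 2).
pose h := (fun y => (-1) * (f \* f) y) \+ ((fun y => (2 * f x) * f y) \+ (fun _ => - f x ^+ 2)).
have Ah : A h by apply: A_add A1 (A_add A2 A3).
have := @L_max h x Ah.
have hx : h x = 0 by rewrite /h /=; ring.
have hy : forall y, h y <= h x.
  move=> y; rewrite hx /h /=.
  have := sqr_ge0 (f y - f x). rewrite !expr2. nra.
move=> /(_ hy); rewrite hx lexx => /(_ isT).
rewrite /h (L_add A1 (A_add A2 A3)) (L_add A2 A3) (L_scale _ Aff) (L_scale _ Af) L_cst /=.
rewrite /Gamma => H.
have H2 : 0 <= L (f \* f) x - f x * L f x - f x * L f x by lra.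
by apply: divr_ge0.
Qed.

Lemma Gamma_meas {f g} : A f -> A g -> measurable_fun setT (Gamma L f g).
Proof.
move=> Af Ag; rewrite /Gamma.
apply: (measurable_realfun.measurable_funM (f := fun x => _) (g := fun _ => _)); last exact: measurable_cst.
apply: (measurable_realfun.measurable_funB (f := fun x => _) (g := fun x => _)); [apply: (measurable_realfun.measurable_funB (f := fun x => _) (g := fun x => _))|].
- exact: L_meas (A_mul Af Ag).
- apply: (measurable_realfun.measurable_funM (f := fun x => _) (g := fun x => _)); [exact: A_meas|exact: L_meas].
- apply: (measurable_realfun.measurable_funM (f := fun x => _) (g := fun x => _)); [exact: A_meas|exact: L_meas].
Qed.


Lemma Gamma0l h x : A h -> Gamma L (fun _ => 0) h x = 0.
Proof.
move=> Ah; rewrite /Gamma.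
have -> : (fun _ : M => 0) \* h = (fun y => 0 * h y) by apply/funext => y /=.
rewrite (L_scale _ Ah) L_cst /=; ring.
Qed.

Lemma GammaDD {f g} x : A f -> A g ->
  Gamma L (f \+ g) (f \+ g) x = Gamma L f f x + 2 * Gamma L f g x + Gamma L g g x.
Proof.
move=> Af Ag; have Afg := A_add Af Ag.
rewrite (GammaD Af Ag Afg) (Gamma_sym f) (Gamma_sym g) (GammaD Af Ag Af) (GammaD Af Ag Ag).
rewrite (Gamma_sym g f); ring.
Qed.

Lemma GammaZZ a {f} x : A f ->
  Gamma L (fun y => a * f y) (fun y => a * f y) x = a ^+ 2 * Gamma L f f x.
Proof.
move=> Af; have Aaf := A_scale a Af.
rewrite (GammaZ _ Af Aaf) (Gamma_sym f) (GammaZ _ Af Af); ring.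
Qed.

Lemma Gamma_le f g x : A f -> A g -> `|Gamma L f g x| <= `|Gamma L f f x + Gamma L g g x|.
Proof.
move=> Af Ag.
have Ag' := A_scale (-1) Ag.
have h1 := Gamma_ge0 x (A_add Af Ag).
have h2 := Gamma_ge0 x (A_add Af Ag').
rewrite GammaDD // in h1; rewrite GammaDD // GammaZZ // in h2.
rewrite (Gamma_sym f) (GammaZ _ Ag Af) (Gamma_sym g) in h2.
have f0 := Gamma_ge0 x Af; have g0 := Gamma_ge0 x Ag.
rewrite (ger0_norm (addr_ge0 f0 g0)) ler_norml; apply/andP; split; nra.
Qed.

Variable nu : probability M R.
Local Notation H := (H1 A L nu).

Definition Bf (f g : M -> R) := \int[nu]_x (f x * g x).
Definition Gf (f g : M -> R) := \int[nu]_x (Gamma L f g x).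

Lemma H_A {f} : H f -> A f. Proof. by case. Qed.

Lemma int_sq {f} : H f -> nu.-integrable setT (EFin \o (fun x => f x ^+ 2)).
Proof.
case=> Af hf _ _; apply/integrableP; split.
  by apply/measurable_realfun.measurable_EFinP; apply: measurable_realfun.measurable_funX; exact: A_meas.
rewrite (eq_integral (fun x => (f x ^+ 2)%:E)) //.
by move=> x _ /=; rewrite ger0_norm ?sqr_ge0.
Qed.

Lemma int_Gam {f} : H f -> nu.-integrable setT (EFin \o Gamma L f f).
Proof.
case=> Af _ _ hf; apply/integrableP; split.
  by apply/measurable_realfun.measurable_EFinP; exact: Gamma_meas.
rewrite (eq_integral (fun x => (Gamma L f f x)%:E)) //.
by move=> x _ /=; rewrite ger0_norm ?Gamma_ge0.
Qed.

Lemma int_f {f} : H f -> nu.-integrable setT (EFin \o f).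
Proof.
move=> Hf.
have hI := integrableD measurableT (finite_measure_integrable_cst nu 1 measurableT) (int_sq Hf).
apply: (le_integrable measurableT _ _ hI).
  by apply/measurable_realfun.measurable_EFinP; apply: A_meas; apply: H_A.
move=> x _ /=; rewrite lee_fin.
rewrite (@ger0_norm _ (1 + _)); last by rewrite addr_ge0 ?sqr_ge0.
have [h|h] := leP 0 (f x).
  by rewrite ger0_norm //; nra.
by rewrite ltr0_norm //; nra.
Qed.

Lemma int_mul {f g} : H f -> H g -> nu.-integrable setT (EFin \o (fun x => f x * g x)).
Proof.
move=> Hf Hg; apply: (le_integrable measurableT _ _ (integrableD measurableT (int_sq Hf) (int_sq Hg))).
  apply/measurable_realfun.measurable_EFinP; apply: (measurable_realfun.measurable_funM (f := fun x => _) (g := fun x => _));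
  by apply: A_meas; apply: H_A.
move=> x _ /=; rewrite lee_fin.
rewrite (@ger0_norm _ (_ + _)); last by rewrite addr_ge0 ?sqr_ge0.
rewrite ler_norml; apply/andP; split; nra.
Qed.

Lemma int_Gam2 {f g} : H f -> H g -> nu.-integrable setT (EFin \o Gamma L f g).
Proof.
move=> Hf Hg; apply: (le_integrable measurableT _ _ (integrableD measurableT (int_Gam Hf) (int_Gam Hg))).
  by apply/measurable_realfun.measurable_EFinP; apply: Gamma_meas; apply: H_A.
move=> x _ /=; rewrite lee_fin.
by apply: Gamma_le; apply: H_A.
Qed.


Lemma intD_r (f g : M -> R) : nu.-integrable setT (EFin \o f) -> nu.-integrable setT (EFin \o g) ->
  nu.-integrable setT (EFin \o (fun x => f x + g x)).
Proof.
move=> If Ig; apply: (eq_integrable measurableT _ _ _ (integrableD measurableT If Ig)).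
by move=> x _ /=; rewrite EFinD.
Qed.

Lemma intZ_r (k : R) (f : M -> R) : nu.-integrable setT (EFin \o f) ->
  nu.-integrable setT (EFin \o (fun x => k * f x)).
Proof.
move=> If; apply: (eq_integrable measurableT _ _ _ (integrableZl measurableT k If)).
by move=> x _ /=; rewrite EFinM.
Qed.

Lemma int_le_r (f g : M -> R) : measurable_fun setT f -> (forall x, `|f x| <= `|g x|) ->
  nu.-integrable setT (EFin \o g) -> nu.-integrable setT (EFin \o f).
Proof.
move=> mf fg Ig; apply: (le_integrable measurableT _ _ Ig).
  exact/measurable_realfun.measurable_EFinP.
by move=> x _ /=; rewrite lee_fin.
Qed.

Lemma lty_of_int (f : M -> R) : nu.-integrable setT (EFin \o f) ->
  (\int[nu]_x (f x)%:E < +oo)%E.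
Proof. by move=> If; exact: (integrable_lty measurableT If). Qed.

Lemma H_add {f g} : H f -> H g -> H (f \+ g).
Proof.
move=> Hf Hg; have Af := H_A Hf; have Ag := H_A Hg; have Afg := A_add Af Ag.
split => //.
- apply: lty_of_int.
  apply: (@int_le_r _ (fun x => 2 * (f x ^+ 2 + g x ^+ 2))).
  + by apply: measurable_realfun.measurable_funX; exact: A_meas.
  + move=> x /=; rewrite ger0_norm ?sqr_ge0 // ger0_norm; last by rewrite mulr_ge0 // addr_ge0 ?sqr_ge0.
    have := sqr_ge0 (f x - g x); rewrite !expr2 => ?; nra.
  + by apply: intZ_r; apply: intD_r; apply: int_sq.
- have -> : (\int[nu]_x ((f \+ g) x)%:E = \int[nu]_x ((EFin \o f) x + (EFin \o g) x))%E.
    by apply: eq_integral => x _ /=; rewrite EFinD.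
  rewrite (integralD measurableT (int_f Hf) (int_f Hg)).
  by case: Hf => _ _ -> _; case: Hg => _ _ -> _; rewrite adde0.
- apply: lty_of_int.
  have -> : Gamma L (f \+ g) (f \+ g) = fun x => Gamma L f f x + (2 * Gamma L f g x + Gamma L g g x).
    by apply/funext => x; rewrite GammaDD // addrA.
  apply: intD_r; first exact: int_Gam.
  by apply: intD_r; [apply: intZ_r; apply: int_Gam2|apply: int_Gam].
Qed.

Lemma H_scale (a : R) {f} : H f -> H (fun x => a * f x).
Proof.
move=> Hf; have Af := H_A Hf; have Aaf := A_scale a Af.
split => //.
- apply: lty_of_int.
  have -> : (fun x => (a * f x) ^+ 2) = (fun x => a ^+ 2 * f x ^+ 2).
    by apply/funext => x; rewrite exprMn.
  by apply: intZ_r; apply: int_sq.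
- have -> : (\int[nu]_x (a * f x)%:E = \int[nu]_x (a%:E * (EFin \o f) x))%E.
    by apply: eq_integral => x _ /=; rewrite EFinM.
  rewrite (integralZl measurableT (int_f Hf)).
  by case: Hf => _ _ -> _; rewrite mule0.
- apply: lty_of_int.
  have -> : Gamma L (fun x => a * f x) (fun x => a * f x) = fun x => a ^+ 2 * Gamma L f f x.
    by apply/funext => x; rewrite GammaZZ.
  by apply: intZ_r; apply: int_Gam.
Qed.

Lemma H_zero : H (fun _ => 0).
Proof.
have A0 : A (fun _ : M => 0) := A_cst 0.
split => //.
- have -> : (fun x : M => ((0 : R) ^+ 2)%:E) = cst 0%E by apply/funext => x; rewrite expr0n.
  by rewrite integral0.
- by rewrite integral0.
- have -> : (fun x => (Gamma L (fun _ => 0) (fun _ => 0) x)%:E) = cst 0%E.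
    by apply/funext => x; rewrite Gamma0l.
  by rewrite integral0.
Qed.

Lemma B_add {f g h} : H f -> H g -> H h -> Bf (f \+ g) h = Bf f h + Bf g h.
Proof.
move=> Hf Hg Hh; rewrite /Bf -(RintegralD measurableT (int_mul Hf Hh) (int_mul Hg Hh)).
by apply: eq_Rintegral => x _ /=; rewrite mulrDl.
Qed.

Lemma B_scale (a : R) {f h} : H f -> H h -> Bf (fun x => a * f x) h = a * Bf f h.
Proof.
move=> Hf Hh; rewrite /Bf -(RintegralZl a measurableT (int_mul Hf Hh)).
by apply: eq_Rintegral => x _ /=; rewrite mulrA.
Qed.

Lemma B_sym f g : Bf f g = Bf g f.
Proof. by rewrite /Bf; apply: eq_Rintegral => x _; rewrite mulrC. Qed.

Lemma G_add {f g h} : H f -> H g -> H h -> Gf (f \+ g) h = Gf f h + Gf g h.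
Proof.
move=> Hf Hg Hh; rewrite /Gf -(RintegralD measurableT (int_Gam2 Hf Hh) (int_Gam2 Hg Hh)).
by apply: eq_Rintegral => x _ /=; rewrite GammaD //; apply: H_A.
Qed.

Lemma G_scale (a : R) {f h} : H f -> H h -> Gf (fun x => a * f x) h = a * Gf f h.
Proof.
move=> Hf Hh; rewrite /Gf -(RintegralZl a measurableT (int_Gam2 Hf Hh)).
by apply: eq_Rintegral => x _ /=; rewrite GammaZ //; apply: H_A.
Qed.

Lemma G_sym f g : Gf f g = Gf g f.
Proof. by rewrite /Gf Gamma_sym. Qed.

Lemma B_ge0 f : 0 <= Bf f f.
Proof. by apply: Rintegral_ge0 => x _; rewrite -expr2 sqr_ge0. Qed.

Lemma G_ge0 {f} : A f -> 0 <= Gf f f.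
Proof. by move=> Af; apply: Rintegral_ge0 => x _; apply: Gamma_ge0. Qed.

Lemma BQ {u v} : H u -> H v ->
  Bf (u \+ v) (u \+ v) = Bf u u + 2 * Bf u v + Bf v v.
Proof.
move=> Hu Hv; have Huv := H_add Hu Hv.
rewrite B_add // (B_sym u) (B_sym v) !B_add // (B_sym v u); ring.
Qed.

Lemma GQ {u v} : H u -> H v ->
  Gf (u \+ v) (u \+ v) = Gf u u + 2 * Gf u v + Gf v v.
Proof.
move=> Hu Hv; have Huv := H_add Hu Hv.
rewrite G_add // (G_sym u) (G_sym v) !G_add // (G_sym v u); ring.
Qed.


Local Notation Esp := (Espace A L nu).

Lemma eqR (f g : M -> R) : (forall x, f x = g x) -> \int[nu]_x f x = \int[nu]_x g x.
Proof. by move=> fg; apply: eq_Rintegral => x _; apply: fg. Qed.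

Lemma Rint0 : \int[nu]_x (0 : R) = 0.
Proof. by rewrite Rintegral_cst // mul0r. Qed.

Lemma SpE_H {E s} : SpE A L nu E s -> H s.
Proof. by case. Qed.

Lemma Esp_H {m e} : Esp m e -> H e.
Proof.
elim: m e => [e /= ->|m IH e [e1 He1 [s Hs <-]]]; first exact: H_zero.
exact: H_add (IH _ He1) (SpE_H Hs).
Qed.

Lemma zero_SpE E : SpE A L nu E (fun _ => 0).
Proof.
split; first exact: H_zero.
split.
  move=> e Ee; rewrite (@eqR _ (fun _ => 0)) ?Rint0 //.
  by move=> x; rewrite mul0r.
move=> g Hg _.
rewrite (@eqR _ (fun _ => 0)); last by move=> x; rewrite Gamma0l //; apply: H_A.
rewrite (@eqR (fun x => 0 * g x) (fun _ => 0)); last by move=> x; rewrite mul0r.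
by rewrite Rint0 mulr0.
Qed.

Lemma Esp0 m : Esp m (fun _ => 0).
Proof.
elim: m => [//|m IH] /=.
exists (fun _ => 0) => //; exists (fun _ => 0); first exact: zero_SpE.
by apply/funext => x /=; rewrite addr0.
Qed.

Lemma Esp_S {m e} : Esp m e -> Esp m.+1 e.
Proof.
move=> He; exists e => //; exists (fun _ => 0); first exact: zero_SpE.
by apply/funext => x /=; rewrite addr0.
Qed.

Lemma Esp_le m n e : (m <= n)%N -> Esp m e -> Esp n e.
Proof.
elim: n => [|n IH] hmn He.
  by move: hmn; rewrite leqn0 => /eqP hm; rewrite -hm.
rewrite leq_eqVlt in hmn; case/orP: hmn => [/eqP <- //|hmn].
by apply: Esp_S; apply: IH.
Qed.

Lemma Sp_in {m s} : SpE A L nu (Esp m) s -> Esp m.+1 s.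
Proof.
move=> Hs; exists (fun _ => 0); first exact: Esp0.
by exists s => //; apply/funext => x /=; rewrite add0r.
Qed.

Lemma orth_le m n h : (m <= n)%N -> orth nu (Esp n) h -> orth nu (Esp m) h.
Proof. by move=> hmn Ho e Ee; apply: Ho; exact: Esp_le Ee. Qed.

Lemma lamE_ge0 E : 0 <= lamE A L nu E.
Proof.
rewrite /lamE.
set S := [set _ | _ in _].
have lb : lbound S 0.
  move=> r [f [Hf _] <-]; apply: divr_ge0; apply: Rintegral_ge0 => x _.
    by apply: Gamma_ge0; exact: H_A Hf.
  exact: sqr_ge0.
have [[r Sr]|ne] := pselect (exists r, S r).
  by apply: lb_le_inf => //; exists r.
rewrite (_ : S = set0) ?inf0 //; apply/seteqP; split => r Sr //.
by exfalso; apply: ne; exists r.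
Qed.

Lemma Qnn E f : H f -> orth nu E f -> lamE A L nu E * Bf f f <= Gf f f.
Proof.
move=> Hf Of.
have hB : Bf f f = \int[nu]_x (f x ^+ 2) by apply: eq_Rintegral => x _; rewrite expr2.
have Af := H_A Hf.
have [npos|pos] := leP (\int[nu]_x (f x ^+ 2)%:E)%E 0%E.
  have h0 : (\int[nu]_x (f x ^+ 2)%:E = 0)%E.
    apply/eqP; rewrite eq_le npos integral_ge0 // => x _; by rewrite lee_fin sqr_ge0.
  by rewrite hB /Rintegral h0 /= mulr0; apply: G_ge0.
rewrite /lamE.
set S := [set _ | _ in _].
have lb : lbound S 0.
  move=> r [g [Hg _] <-]; apply: divr_ge0; apply: Rintegral_ge0 => x _.
    by apply: Gamma_ge0; exact: H_A Hg.
  exact: sqr_ge0.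
have Sr : S (Gf f f / \int[nu]_x (f x ^+ 2)) by exists f.
have := ge_inf (ex_intro _ 0 lb) Sr.
have Bpos : 0 < \int[nu]_x (f x ^+ 2).
  apply: fine_gt0; rewrite pos /=; by case: Hf.
by rewrite ler_pdivlMr // -hB.
Qed.

Lemma quad_cs (a b c : R) : 0 <= c -> (forall t, 0 <= a + 2 * t * b + t ^+ 2 * c) ->
  b ^+ 2 <= a * c.
Proof.
move=> c0 Ht.
have [cpos|cle] := ltP 0 c.
  have h := Ht (- b / c).
  have tc : (- b / c) * c = - b by rewrite divfK // gt_eqF.
  have h2 := mulr_ge0 (ltW cpos) h.
  have e2 : c * (a + 2 * (- b / c) * b + (- b / c) ^+ 2 * c)
     = a * c + 2 * b * ((- b / c) * c) + ((- b / c) * c) ^+ 2 by ring.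
  by rewrite e2 tc in h2; nra.
have c00 : c = 0 by apply/eqP; rewrite eq_le cle c0.
rewrite c00 in Ht *.
have [->|bn0] := eqVneq b 0; first by rewrite expr0n mulr0.
exfalso.
have h := Ht (- (a + 1) / (2 * b)).
have ha := Ht 0.
have e : (- (a + 1) / (2 * b)) * (2 * b) = - (a + 1) by rewrite divfK // mulf_neq0.
have e2 : a + 2 * (- (a + 1) / (2 * b)) * b + (- (a + 1) / (2 * b)) ^+ 2 * 0
  = a + (- (a + 1) / (2 * b)) * (2 * b) by ring.
rewrite e2 e in h; move: ha; rewrite !mulr0 !mul0r !addr0 => ha; lra.
Qed.


Definition Tsum (p : nat -> M -> R) m := fun x => \sum_(1 <= i < m.+1) p i x.

Lemma Tsum0 p : Tsum p 0 = fun _ => 0.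
Proof. by apply/funext => x; rewrite /Tsum big_geq. Qed.

Lemma TsumS p m : Tsum p m.+1 = Tsum p m \+ p m.+1.
Proof. by apply/funext => x; rewrite /Tsum /= big_nat_recr. Qed.

Lemma partial (p : nat -> M -> R) (k : nat)
  (hp : forall i, (1 <= i < k)%N -> SpE A L nu (Esp i.-1) (p i)) m : (m < k)%N ->
  [/\ H (Tsum p m), Esp m (Tsum p m),
     (forall h, H h -> orth nu (Esp m) h -> Gf (Tsum p m) h = 0),
     Bf (Tsum p m) (Tsum p m) = \sum_(1 <= i < m.+1) Bf (p i) (p i)
   & Gf (Tsum p m) (Tsum p m) = \sum_(1 <= i < m.+1) lamE A L nu (Esp i.-1) * Bf (p i) (p i)].
Proof.
elim: m => [_|m IH hm].
  rewrite Tsum0 !big_geq //; split.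
  - exact: H_zero.
  - by [].
  - move=> h Hh _; rewrite /Gf (@eqR _ (fun _ => 0)) ?Rint0 //.
    by move=> x; rewrite Gamma0l //; apply: H_A.
  - by rewrite /Bf (@eqR _ (fun _ => 0)) ?Rint0 // => x; rewrite mulr0.
  - by rewrite /Gf (@eqR _ (fun _ => 0)) ?Rint0 // => x; rewrite Gamma0l //; apply: A_cst.
have [Ha Hb Hc Hd He] := IH (ltnW hm).
have Sp1 : SpE A L nu (Esp m) (p m.+1) by apply: (hp m.+1); rewrite hm.
have HP := SpE_H Sp1.
case: Sp1 => _ [orthP eqP0].
have eqP : forall g, H g -> orth nu (Esp m) g ->
  Gf (p m.+1) g = lamE A L nu (Esp m) * Bf (p m.+1) g := eqP0.
have Sp1 : SpE A L nu (Esp m) (p m.+1) by apply: (hp m.+1); rewrite hm.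
rewrite TsumS; split.
- exact: H_add.
- by exists (Tsum p m) => //; exists (p m.+1).
- move=> h Hh Oh.
  have Oh' := @orth_le m m.+1 h (leqnSn m) Oh.
  rewrite G_add // Hc // eqP // B_sym.
  have -> : Bf h (p m.+1) = 0 := Oh (p m.+1) (Sp_in Sp1).
  by rewrite mulr0 add0r.
- rewrite BQ //.
  have -> : Bf (Tsum p m) (p m.+1) = 0 by rewrite B_sym; exact: orthP _ Hb.
  rewrite big_nat_recr //= Hd; ring.
- rewrite GQ // (Hc _ HP orthP) eqP // big_nat_recr //= He; ring.
Qed.


Lemma core (m : nat) (lmk : R) (fk : M -> R) :
  A fk ->
  (\int[nu]_x (fk x)%:E = 0)%E ->
  (\int[nu]_x (fk x ^+ 2)%:E = 1)%E ->
  (\int[nu]_x (Gamma L fk fk x)%:E <= lmk%:E)%E ->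
  forall p : nat -> (M -> R),
    (forall i, (1 <= i < m.+1)%N -> Sp A L nu i (p i)) ->
    let pperp := fun x => fk x - \sum_(1 <= i < m.+1) p i x in
    orth nu (Espace A L nu m) pperp ->
    forall g : M -> R, H1 A L nu g -> orth nu (Espace A L nu m) g ->
      `| \int[nu]_x (lam_nu A L nu m.+1 * pperp x * g x - Gamma L pperp g x) |
      <= Num.sqrt (lmk - lam_nu A L nu m.+1
             + \sum_(1 <= i < m.+1) (lam_nu A L nu m.+1 - lam_nu A L nu i)
                                  * \int[nu]_x (p i x ^+ 2))
         * Num.sqrt (\int[nu]_x (Gamma L g g x)).
Proof.
move=> Afk m1 m2 mG p hSp pperp Opp g Hg Og.
set lam := lam_nu A L nu m.+1.
have [Ha Hb Hc Hd He] := @partial p m.+1 hSp m (ltnSn m).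
have Hfk : H1 A L nu fk.
  split => //; first by rewrite m2 ltry.
  exact: le_lt_trans mG (ltry _).
have eT : pperp = fk \+ (fun x => -1 * Tsum p m x).
  by apply/funext => x; rewrite /pperp /Tsum /=; ring.
have Hpp : H1 A L nu pperp by rewrite eT; apply: H_add Hfk (H_scale _ Ha).
have efk2 : fk = pperp \+ Tsum p m.
  by apply/funext => x; rewrite /pperp /Tsum /=; ring.
have GT : Gf pperp (Tsum p m) = 0 by rewrite G_sym; apply: Hc.
have BT : Bf pperp (Tsum p m) = 0 by apply: Opp.
have Bfk : Bf fk fk = 1.
  rewrite /Bf (@eqR _ (fun x => fk x ^+ 2)); last by move=> x; rewrite expr2.
  by rewrite /Rintegral m2.
have Gfk : Gf fk fk <= lmk.
  rewrite /Gf /Rintegral -lee_fin fineK //.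
  exact: (integrable_fin_num measurableT (int_Gam Hfk)).
have eB : Bf fk fk = Bf pperp pperp + Bf (Tsum p m) (Tsum p m).
  by rewrite {1 2}efk2 (BQ Hpp Ha) BT; ring.
have eG : Gf fk fk = Gf pperp pperp + Gf (Tsum p m) (Tsum p m).
  by rewrite {1 2}efk2 (GQ Hpp Ha) GT; ring.
have lam0 : 0 <= lam := lamE_ge0 _.
have eI : \int[nu]_x (lam * pperp x * g x - Gamma L pperp g x)
    = lam * Bf pperp g - Gf pperp g.
  rewrite (@eqR _ (fun x => lam * (pperp x * g x) - Gamma L pperp g x)); last first.
    by move=> x; rewrite mulrA.
  rewrite (RintegralB measurableT (@intZ_r lam _ (int_mul Hpp Hg)) (int_Gam2 Hpp Hg)).
  by rewrite (RintegralZl lam measurableT (int_mul Hpp Hg)).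
have Qg0 : lam * Bf g g <= Gf g g := @Qnn _ _ Hg Og.
have Qp0 : lam * Bf pperp pperp <= Gf pperp pperp := @Qnn _ _ Hpp Opp.
have CS : (Gf pperp g - lam * Bf pperp g) ^+ 2
    <= (Gf pperp pperp - lam * Bf pperp pperp) * (Gf g g - lam * Bf g g).
  apply: quad_cs; first by rewrite subr_ge0.
  move=> t.
  have Ht := H_scale t Hg.
  have Hu := H_add Hpp Ht.
  have Ou : orth nu (Esp m) (pperp \+ (fun x => t * g x)).
    move=> e Ee; have He0 := Esp_H Ee.
    have -> : \int[nu]_x ((pperp \+ (fun x => t * g x)) x * e x)
       = Bf (pperp \+ (fun x => t * g x)) e by [].
    rewrite B_add // B_scale //.
    have -> : Bf pperp e = 0 := Opp e Ee.
    have -> : Bf g e = 0 := Og e Ee.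
    ring.
  have := @Qnn _ _ Hu Ou.
  have b1 : Bf pperp (fun x => t * g x) = t * Bf pperp g by rewrite B_sym B_scale // B_sym.
  have b2 : Bf (fun x => t * g x) (fun x => t * g x) = t ^+ 2 * Bf g g.
    by rewrite B_scale // B_sym B_scale //; ring.
  have g1 : Gf pperp (fun x => t * g x) = t * Gf pperp g by rewrite G_sym G_scale // G_sym.
  have g2 : Gf (fun x => t * g x) (fun x => t * g x) = t ^+ 2 * Gf g g.
    by rewrite G_scale // G_sym G_scale //; ring.
  rewrite BQ // GQ // b1 b2 g1 g2 -subr_ge0 => h.
  set lhs := (X in 0 <= X).
  suff -> : lhs = Gf pperp pperp + 2 * (t * Gf pperp g) + t ^+ 2 * Gf g g -
    lam * (Bf pperp pperp + 2 * (t * Bf pperp g) + t ^+ 2 * Bf g g) by [].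
  rewrite /lhs; ring.
have eBpp : Bf pperp pperp = 1 - \sum_(1 <= i < m.+1) Bf (p i) (p i).
  by rewrite -Hd -Bfk eB; ring.
have eX : \sum_(1 <= i < m.+1) (lam - lam_nu A L nu i) * \int[nu]_x (p i x ^+ 2)
   = lam * \sum_(1 <= i < m.+1) Bf (p i) (p i)
     - \sum_(1 <= i < m.+1) lamE A L nu (Esp i.-1) * Bf (p i) (p i).
  rewrite mulr_sumr -sumrB; apply: eq_bigr => i _.
  rewrite (@eqR (fun x => p i x ^+ 2) (fun x => p i x * p i x)); last by move=> x; rewrite expr2.
  change (\int[nu]_x (p i x * p i x)) with (Bf (p i) (p i)).
  rewrite /lam_nu; ring.
have Qpp_le : Gf pperp pperp - lam * Bf pperp pperp
   <= lmk - lam + \sum_(1 <= i < m.+1) (lam - lam_nu A L nu i) * \int[nu]_x (p i x ^+ 2).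
  rewrite eX eBpp.
  have : Gf fk fk = Gf pperp pperp + \sum_(1 <= i < m.+1) lamE A L nu (Esp i.-1) * Bf (p i) (p i).
    by rewrite eG He.
  move: Gfk; set S1 := \sum_(1 <= i < m.+1) Bf (p i) (p i).
  set S2 := \sum_(1 <= i < m.+1) _ * _.
  move=> h1 h2.
  have -> : lam * (1 - S1) = lam - lam * S1 by ring.
  lra.
have Bg0 := B_ge0 g.
have cle : Gf g g - lam * Bf g g <= Gf g g.
  by rewrite lerBlDr lerDl; apply: mulr_ge0.
rewrite eI.
rewrite (_ : lam * Bf pperp g - Gf pperp g = - (Gf pperp g - lam * Bf pperp g)); last by ring.
rewrite normrN -sqrtr_sqr -sqrtrM; last first.
  by apply: le_trans Qpp_le; rewrite subr_ge0.
apply: ler_wsqrtr; apply: le_trans CS _.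
apply: ler_pM => //; rewrite subr_ge0 //.
Qed.

End Gen.

Theorem mainTheorem2 (d : measure_display) (M : measurableType d) (R : realType)
  (A : set (M -> R)) (L : (M -> R) -> (M -> R)) (mu nu : probability M R)
  (k : nat) (lam_mu : nat -> R) (fk : M -> R) :
  (1 <= k)%N ->
  markov_generator A L ->
  reversible A L mu ->
  first_eigenvalues A L mu k lam_mu ->
  eigenfun A L mu (lam_mu k) fk ->
  (\int[mu]_x (fk x)%:E = 0)%E ->
  (\int[mu]_x (fk x ^+ 2)%:E = 1)%E ->
  (\int[nu]_x (fk x)%:E = 0)%E ->
  (\int[nu]_x (fk x ^+ 2)%:E = 1)%E ->
  (\int[nu]_x (Gamma L fk fk x)%:E <= (lam_mu k)%:E)%E ->
  forall p : nat -> (M -> R),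
    (forall i, (1 <= i < k)%N -> Sp A L nu i (p i)) ->
    let pperp := fun x => fk x - \sum_(1 <= i < k) p i x in
    orth nu (Espace A L nu k.-1) pperp ->
    forall g : M -> R, H1 A L nu g -> orth nu (Espace A L nu k.-1) g ->
      `| \int[nu]_x (lam_nu A L nu k * pperp x * g x - Gamma L pperp g x) |
      <= Num.sqrt (lam_mu k - lam_nu A L nu k
             + \sum_(1 <= i < k) (lam_nu A L nu k - lam_nu A L nu i)
                                  * \int[nu]_x (p i x ^+ 2))
         * Num.sqrt (\int[nu]_x (Gamma L g g x)).
Proof.
case: k => [//|m] _ hL _ _ efk _ _ m1 m2 mG p hSp pperp Opp g Hg Og.
have Afk : A fk by case: efk.
exact: (@core _ _ _ A L hL nu m (lam_mu m.+1) fk Afk m1 m2 mG p hSp Opp g Hg Og).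
Qed.
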